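(* Let $\mathscr H$ be a complex Hilbert space and $\mathbf{T}=(T_1,\dots,T_d)\in\mathbb{B}(\mathscr H)^d$. Then for every $x\in\mathscr H$, $$\sum_{k=1}^{d}\|T_kx\|^2+\sum_{k=1}^{d}|\langle T_k^2x,x\rangle|\le 2\sqrt{d}\,w_e(\mathbf{T})\Big(\sum_{k=1}^{d}\|T_kx\|^2\Big)^{1/2}\|x\|.$$
   Context: $\mathbb{B}(\mathscr H)$ denotes the bounded linear operators on $\mathscr H$. For a $d$-tuple $\mathbf{T}=(T_1,\dots,T_d)\in\mathbb{B}(\mathscr H)^d$, the Euclidean operator radius (joint numerical radius) is $w_e(\mathbf{T})=\sup\{(\sum_{k=1}^d|\langle T_kx,x\rangle|^2)^{1/2}: x\in\mathscr H,\ \|x\|=1\}$. *)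

(* Defs.v *)
From HB Require Import structures.
From mathcomp Require Import all_boot all_order all_algebra.
From mathcomp Require Import complex.
From mathcomp Require Import classical_sets reals.
Set Implicit Arguments. Unset Strict Implicit. Unset Printing Implicit Defensive.
Import Order.TTheory GRing.Theory Num.Theory.
Local Open Scope ring_scope.
Local Open Scope complex_scope.

Definition cmod (R : rcfType) (z : R[i]) : R :=
  Num.sqrt (complex.Re z ^+ 2 + complex.Im z ^+ 2).

Definition is_inner_product (R : rcfType) (V : lmodType R[i])
    (ip : V -> V -> R[i]) : Prop :=
  [/\ (forall (a : R[i]) (x y z : V), ip (a *: x + y) z = a * ip x z + ip y z),
      (forall x y : V, ip y x = (ip x y)^*),
      (forall x : V, 0 <= ip x x)
    & (forall x : V, ip x x = 0 -> x = 0)].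

Definition ipnorm (R : rcfType) (V : lmodType R[i]) (ip : V -> V -> R[i])
    (x : V) : R := Num.sqrt (complex.Re (ip x x)).

Definition ip_complete (R : rcfType) (V : lmodType R[i])
    (ip : V -> V -> R[i]) : Prop :=
  forall u : nat -> V,
    (forall e : R, 0 < e -> exists N : nat, forall m n : nat,
        (N <= m)%N -> (N <= n)%N -> ipnorm ip (u m - u n) < e) ->
    exists l : V, forall e : R, 0 < e -> exists N : nat, forall n : nat,
        (N <= n)%N -> ipnorm ip (u n - l) < e.

Definition is_hilbert (R : rcfType) (V : lmodType R[i])
    (ip : V -> V -> R[i]) : Prop :=
  is_inner_product ip /\ ip_complete ip.

Definition bounded_op (R : rcfType) (V : lmodType R[i])
    (ip : V -> V -> R[i]) (A : V -> V) : Prop :=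
  exists M : R, forall x : V, ipnorm ip (A x) <= M * ipnorm ip x.

Definition euclid_op_radius (R : realType) (V : lmodType R[i])
    (ip : V -> V -> R[i]) (d : nat) (T : 'I_d -> V -> V) : R :=
  sup [set r : R | exists x : V, ipnorm ip x = 1 /\
         r = Num.sqrt (\sum_(k < d) cmod (ip (T k x) x) ^+ 2)].

(* Main.v *)
Require Import Defs.
From HB Require Import structures.
From mathcomp Require Import all_boot all_order all_algebra.
From mathcomp Require Import complex.
From mathcomp Require Import classical_sets reals.
From mathcomp Require Import ring lra.
From mathcomp Require Import boolp.
Import Order.TTheory GRing.Theory Num.Theory.
Local Open Scope ring_scope.
Local Open Scope complex_scope.

Section Cx.
Variable R : rcfType.
Implicit Types a b g : R[i].

Lemma cmodE a : `|a| = (cmod a)%:C.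
Proof. by rewrite normc_def. Qed.

Lemma conj_norm a : (`|a|)^* = `|a|.
Proof. by exact: conj_normC. Qed.

Lemma phase a b : exists g, g * g^* = 1 /\ `|g * a + g^* * b| = `|a| + `|b|.
Proof.
have [z0|z0] := eqVneq (a^* * b) 0.
  exists 1; rewrite conjC1 mulr1 !mul1r; split => //.
  move/eqP: z0; rewrite mulf_eq0 conjc_eq0 => /orP[]/eqP->;
  by rewrite normr0 ?add0r ?addr0.
set A := `|a|; set B := `|b|.
have an : a != 0 by apply: contraNneq z0 => ->; rewrite conjC0 mul0r.
have bn : b != 0 by apply: contraNneq z0 => ->; rewrite mulr0.
have ABn : A * B != 0 by rewrite mulf_neq0 // normr_eq0.
set w := a^* * b / (A * B).
set g := sqrtC w.
have g2 : g ^+ 2 = w by rewrite sqrtCK.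
have gc2 : (g^*) ^+ 2 = a * b^* / (A * B).
  rewrite -rmorphXn /= g2 /w rmorphM /= fmorphV /= rmorphM /= conjCK.
  by rewrite rmorphM /= /A /B !conj_normC.
have hA : a * a^* = A ^+ 2 by rewrite normCK.
have hB : b * b^* = B ^+ 2 by rewrite normCK.
have gg : g * g^* = 1.
  rewrite -normCK -normrX g2 /w normrM normfV normrM norm_conjC.
  by rewrite /A /B normrM !normr_id divff.
exists g; split => //.
apply/eqP; rewrite -(@eqrXn2 _ 2) // ?addr_ge0 //.
rewrite normCK rmorphD /= !rmorphM /= conjCK.
have -> : (g * a + g^* * b) * (g^* * a^* + g * b^*) =
  (g * g^*) * (a * a^*) + g ^+ 2 * (a * b^*) + (g^*) ^+ 2 * (a^* * b)
  + (g * g^*) * (b * b^*) by ring.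
rewrite gg g2 gc2 hA hB /w.
have -> : a^* * b / (A * B) * (a * b^*) = (a * a^*) * (b * b^*) / (A * B) by ring.
have -> : a * b^* / (A * B) * (a^* * b) = (a * a^*) * (b * b^*) / (A * B) by ring.
rewrite hA hB.
apply/eqP; field.
move: ABn; rewrite mulf_eq0 negb_or => /andP[h1 h2].
  by apply/andP; split; [exact: h2 | exact: h1].
exact: normr_ge0.
exact: normr_ge0.
Qed.


Lemma cmodM a b : cmod (a * b) = cmod a * cmod b.
Proof. by apply: (@complexI R); rewrite rmorphM /= -!cmodE normrM. Qed.

Lemma cmodB a b : cmod (a - b) <= cmod a + cmod b.
Proof. by have := ler_normB a b; rewrite !cmodE -rmorphD /= lecR. Qed.

Lemma cmod_ge0 a : 0 <= cmod a.
Proof. by have := normr_ge0 a; rewrite cmodE lecR. Qed.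

Lemma cmodR (k : R) : 0 <= k -> cmod k%:C = k.
Proof. by move=> k0; apply: (@complexI R); rewrite -cmodE ger0_norm // lecR. Qed.

Lemma cmod_phase a b : exists g, g * g^* = 1 /\ cmod (g * a + g^* * b) = cmod a + cmod b.
Proof.
have [g [h1 h2]] := phase a b; exists g; split => //.
by apply: (@complexI R); rewrite rmorphD /= -!cmodE.
Qed.

Lemma conjR (k : R) : (k%:C)^* = k%:C.
Proof. exact: (conjc_real k). Qed.

End Cx.

Section IP.
Variables (R : realType) (V : lmodType R[i]) (ip : V -> V -> R[i]).
Hypothesis hip : is_inner_product ip.

Let N (x : V) := complex.Re (ip x x).

Lemma ipD_l x y z : ip (x + y) z = ip x z + ip y z.
Proof. by case: hip => lin _ _ _; rewrite -[x in LHS]scale1r lin mul1r. Qed.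

Lemma ip0_l z : ip 0 z = 0.
Proof. by apply/eqP; rewrite -(addrI (ip 0 z) (_ : ip 0 z + ip 0 z = ip 0 z + 0)) // addr0 -ipD_l addr0. Qed.

Lemma ipZ_l a x z : ip (a *: x) z = a * ip x z.
Proof. by case: hip => lin _ _ _; rewrite -[a *: x]addr0 lin ip0_l addr0. Qed.

Lemma ipN_l x z : ip (- x) z = - ip x z.
Proof. by rewrite -scaleN1r ipZ_l mulN1r. Qed.

Lemma ipB_l x y z : ip (x - y) z = ip x z - ip y z.
Proof. by rewrite ipD_l ipN_l. Qed.

Lemma ipC x y : ip y x = (ip x y)^*.
Proof. by case: hip. Qed.

Lemma ipD_r x y z : ip z (x + y) = ip z x + ip z y.
Proof. by rewrite [LHS]ipC [ip z x]ipC [ip z y]ipC ipD_l; apply: rmorphD. Qed.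

Lemma ipZ_r a x z : ip z (a *: x) = a^* * ip z x.
Proof. by rewrite [LHS]ipC [ip z x]ipC ipZ_l; apply: rmorphM. Qed.

Lemma ipB_r x y z : ip z (x - y) = ip z x - ip z y.
Proof. by rewrite [LHS]ipC [ip z x]ipC [ip z y]ipC ipB_l; apply: rmorphB. Qed.

Lemma ip0_r z : ip z 0 = 0.
Proof. by rewrite ipC ip0_l conjc0. Qed.

Lemma N_ge0 x : 0 <= N x.
Proof. by case: hip => _ _ h _; have := h x; rewrite lecE => /andP[_]. Qed.

Lemma ipxx x : ip x x = (N x)%:C.
Proof. by case: hip => _ _ h _; rewrite RRe_real // ger0_real. Qed.

Lemma N0 x : N x = 0 -> x = 0.
Proof. by case: hip => _ _ _ h; move=> H; apply: h; rewrite ipxx H. Qed.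

Lemma ipnorm2 x : ipnorm ip x ^+ 2 = N x.
Proof. by rewrite sqr_sqrtr // N_ge0. Qed.


Lemma ipZZ c x : ip (c *: x) (c *: x) = (cmod c ^+ 2)%:C * ip x x.
Proof. by rewrite ipZ_l ipZ_r mulrA -normCK cmodE rmorphXn. Qed.

Lemma NZ c x : N (c *: x) = cmod c ^+ 2 * N x.
Proof. apply: (@complexI R); rewrite -ipxx ipZZ ipxx; symmetry; exact: rmorphM. Qed.

Lemma paraN p q : N (p + q) + N (p - q) = 2 * (N p + N q).
Proof.
apply: (@complexI R); rewrite rmorphM !rmorphD /= -!ipxx.
rewrite !ipB_l !ipB_r !ipD_l !ipD_r.
by rewrite rmorph1; ring.
Qed.

Lemma ip_half y z : 2 * cmod (ip y z) <= N y + N z.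
Proof.
set w := ip y z.
have [w0|w0] := eqVneq w 0.
  by rewrite w0 cmodR // mulr0 addr_ge0 // N_ge0.
have nw : `|w| != 0 by rewrite normr_eq0.
set c := w / `|w|.
have h : 0 <= ip (y - c *: z) (y - c *: z) by case: hip.
have hw : w * w^* = `|w| ^+ 2 by rewrite normCK.
have E : ip (y - c *: z) (y - c *: z) = (N y + N z - 2 * cmod w)%:C.
  rewrite ipB_l !ipB_r !ipZ_l !ipZ_r [ip z y]ipC -/w !ipxx /c rmorphM /= fmorphV /= conj_normC.
  have -> : (N y)%:C - w^* * `|w|^-1 * w - (w / `|w| * w^* - w / `|w| * (w^* * `|w|^-1 * (N z)%:C))
     = (N y)%:C + (N z)%:C * ((w * w^*) / `|w| ^+ 2) - 2%:R * ((w * w^*) / `|w|) by field.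
  rewrite hw divff ?expf_neq0 // mulr1 expr2 (mulfK nw) cmodE.
  by rewrite rmorphB rmorphD rmorphM rmorph_nat.
by move: h; rewrite E ler0c subr_ge0 addrC.
Qed.

Section Op.
Variables (T : {linear V -> V}) (W : R).
Hypothesis HW : forall z, cmod (ip (T z) z) <= W * N z.

Lemma polar p q : ip (T (p + q)) (p + q) - ip (T (p - q)) (p - q)
  = 2%:R * (ip (T p) q + ip (T q) p).
Proof.
rewrite linearD linearB !ipB_l !ipB_r !ipD_l !ipD_r; ring.
Qed.


Lemma cR (k : R) : 0 <= k -> Num.conj (k%:C) = k%:C.
Proof. by move=> h; rewrite geC0_conj // ler0c. Qed.

Lemma Nsq x : N x = ipnorm ip x ^+ 2.
Proof. by rewrite ipnorm2. Qed.

Lemma key u v : cmod (ip (T u) v) + cmod (ip (T v) u)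
  <= 2 * W * ipnorm ip u * ipnorm ip v.
Proof.
set s := ipnorm ip u; set r := ipnorm ip v.
have s0 : 0 <= s := sqrtr_ge0 _.
have r0 : 0 <= r := sqrtr_ge0 _.
have [g [gg hg]] := @cmod_phase _ (ip (T u) v) (ip (T v) u).
set p := (r%:C * g) *: u; set q := s%:C *: v.
have e1 : ip (T p) q = (r * s)%:C * (g * ip (T u) v).
  rewrite /p /q linearZ ipZ_l ipZ_r (geC0_conj (_ : 0 <= s%:C)) ?ler0c // rmorphM; ring.
have e2 : ip (T q) p = (r * s)%:C * (g^* * ip (T v) u).
  by rewrite /p /q linearZ ipZ_l ipZ_r rmorphM /= cR // rmorphM; ring.
have hPQ : 2 * (r * s) * (cmod (ip (T u) v) + cmod (ip (T v) u))
     <= W * (N (p + q) + N (p - q)).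
  rewrite -hg -(@cmodR _ (2 * (r * s))) ?mulr_ge0 // -cmodM.
  have -> : (2 * (r * s))%:C * (g * ip (T u) v + g^* * ip (T v) u)
      = ip (T (p + q)) (p + q) - ip (T (p - q)) (p - q).
    by rewrite polar e1 e2 rmorphM rmorph_nat; ring.
  rewrite mulrDr.
  apply: (le_trans (@cmodB _ _ _)).
  by apply: lerD; apply: HW.
have hNp : N p = r ^+ 2 * s ^+ 2.
  apply: (@complexI R); rewrite -ipxx /p ipZ_l ipZ_r rmorphM /= cR // ipxx Nsq.
  have -> : r%:C * g * (r%:C * g^* * (s ^+ 2)%:C) = (r%:C)^+2 * (g * g^*) * (s ^+ 2)%:C by ring.
  by rewrite gg mulr1 -rmorphXn -rmorphM.
have hNq : N q = s ^+ 2 * r ^+ 2.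
  apply: (@complexI R); rewrite -ipxx /q ipZ_l ipZ_r cR // ipxx Nsq.
  have -> : s%:C * (s%:C * (r ^+ 2)%:C) = (s%:C)^+2 * (r ^+ 2)%:C by ring.
  by rewrite -rmorphXn -rmorphM.
move: hPQ; rewrite paraN hNp hNq => hPQ.
have [rs0|rs0] := eqVneq (r * s) 0.
  have : (r == 0) || (s == 0) by rewrite -mulf_eq0 rs0.
  case/orP => /eqP z0.
    have v0 : v = 0 by apply: N0; rewrite Nsq -/r z0 expr0n.
    by rewrite v0 ip0_r linear0 ip0_l cmodR // addr0 /r v0 /ipnorm ip0_l /= sqrtr0 mulr0.
  have u0 : u = 0 by apply: N0; rewrite Nsq -/s z0 expr0n.
  by rewrite u0 ip0_r linear0 ip0_l cmodR // addr0 /s u0 /ipnorm ip0_l /= sqrtr0 mulr0 mul0r.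
have t0 : 0 < 2 * (r * s) by rewrite mulr_gt0 // lt_def rs0 mulr_ge0.
rewrite -(ler_pM2l t0); apply: (le_trans hPQ); rewrite le_eqVlt; apply/orP; left.
by apply/eqP; ring.
Qed.

End Op.
End IP.

Arguments ipD_l {R V ip} hip.
Arguments ip0_l {R V ip} hip.
Arguments ipZ_l {R V ip} hip.
Arguments ipN_l {R V ip} hip.
Arguments ipB_l {R V ip} hip.
Arguments ipC {R V ip} hip.
Arguments ipD_r {R V ip} hip.
Arguments ipZ_r {R V ip} hip.
Arguments ipB_r {R V ip} hip.
Arguments ip0_r {R V ip} hip.
Arguments N_ge0 {R V ip} hip.
Arguments ipxx {R V ip} hip.
Arguments N0 {R V ip} hip.
Arguments ipnorm2 {R V ip} hip.
Arguments ipZZ {R V ip} hip.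
Arguments NZ {R V ip} hip.
Arguments paraN {R V ip} hip.
Arguments ip_half {R V ip} hip.
Arguments Nsq {R V ip} hip.
Arguments polar {R V ip} hip.
Arguments key {R V ip} hip {T W}.
Arguments cR {R}.
Arguments cmodE {R}.
Arguments conj_norm {R}.
Arguments phase {R}.
Arguments cmodM {R}.
Arguments cmodB {R}.
Arguments cmod_ge0 {R}.
Arguments cmodR {R}.
Arguments cmod_phase {R}.
Arguments conjR {R}.

Lemma sum_cs (R : rcfType) (n : nat) (y : 'I_n -> R) :
  (\sum_k y k) ^+ 2 <= n%:R * \sum_k y k ^+ 2.
Proof.
set S := \sum_k y k; set Q := \sum_k y k ^+ 2.
have e : forall j, \sum_k (y j - y k) ^+ 2 = n%:R * y j ^+ 2 + Q - 2 * (y j * S).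
  move=> j; under eq_bigr => k _ do rewrite sqrrB.
  rewrite big_split big_split /= sumrN sumr_const card_ord sumrMnl -mulr_sumr -/S.
  by rewrite -/Q; ring.
have h : 0 <= \sum_j \sum_k (y j - y k) ^+ 2.
  by apply: sumr_ge0 => j _; apply: sumr_ge0 => k _; apply: sqr_ge0.
rewrite (eq_bigr _ (fun j _ => e j)) in h.
move: h; rewrite big_split big_split /= sumrN sumr_const card_ord -mulr_sumr -mulr_sumr -mulr_suml -/Q -/S.
move=> h; nra.
Qed.

Lemma sq_le (R : rcfType) (a b : R) : 0 <= a -> a <= b -> a ^+ 2 <= b ^+ 2.
Proof. by move=> a0 ab; apply: lerXn2r; rewrite // nnegrE (le_trans a0). Qed.

Lemma term_le_sqrt (R : rcfType) (n : nat) (f : 'I_n -> R) k :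
  (forall j, 0 <= f j) -> f k <= Num.sqrt (\sum_j f j ^+ 2).
Proof.
move=> f0; rewrite -(ger0_norm (f0 k)) -sqrtr_sqr; apply: ler_wsqrtr.
by rewrite (bigD1 k) //= lerDl sumr_ge0 // => j _; apply: sqr_ge0.
Qed.

Theorem theorem2p2 (R : realType) (V : lmodType R[i]) (ip : V -> V -> R[i])
    (hV : is_hilbert ip) (d : nat) (T : 'I_d -> {linear V -> V})
    (hT : forall k : 'I_d, bounded_op ip (T k)) (x : V) :
  \sum_(k < d) ipnorm ip (T k x) ^+ 2
    + \sum_(k < d) cmod (ip (T k (T k x)) x)
  <= 2 * Num.sqrt (d%:R) * euclid_op_radius ip (fun k => T k)
       * Num.sqrt (\sum_(k < d) ipnorm ip (T k x) ^+ 2) * ipnorm ip x.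
Proof.
case: hV => hip _.
set N := fun z => complex.Re (ip z z).
have [M hM] := choice hT.
set Sset := [set r : R | exists x0 : V, ipnorm ip x0 = 1 /\
         r = Num.sqrt (\sum_(k < d) cmod (ip (T k x0) x0) ^+ 2)]%classic.
have eW : euclid_op_radius ip (fun k => T k) = sup Sset by [].
set W := euclid_op_radius ip (fun k => T k).
have ub : has_ubound Sset.
  exists (Num.sqrt (\sum_(k < d) ((M k ^+ 2 + 1) / 2) ^+ 2)) => r [z [hz ->]].
  apply: ler_wsqrtr; apply: ler_sum => k _; apply: sq_le; first exact: cmod_ge0.
  have hNz : N z = 1 by rewrite /N -(ipnorm2 hip) hz expr1n.
  have h1 := ip_half hip (T k z) z.
  have h2 : ipnorm ip (T k z) <= M k by have := hM k z; rewrite hz mulr1.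
  have h3 : N (T k z) <= M k ^+ 2.
    by rewrite /N -(ipnorm2 hip); apply: sq_le => //; apply: sqrtr_ge0.
  move: h1; rewrite -/(N z) -/(N (T k z)) hNz => h1.
  lra.
have HW : forall k z, cmod (ip (T k z) z) <= W * N z.
  move=> k z.
  have [z0|z0] := eqVneq (N z) 0.
    by rewrite z0 (N0 hip _ z0) linear0 (ip0_l hip) cmodR // mulr0.
  set s := ipnorm ip z.
  have hs : N z = s ^+ 2 by rewrite /N -(ipnorm2 hip).
  have s0 : 0 < s by rewrite lt_def sqrtr_ge0 andbT; apply: contraNneq z0 => e; rewrite hs e expr0n.
  set z' := (s^-1)%:C *: z.
  have hz' : ipnorm ip z' = 1.
    rewrite /ipnorm /z'; have := NZ hip (s^-1)%:C z; rewrite /= => ->.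
    rewrite cmodR ?invr_ge0 ?ltW // -/(N z) hs exprVn mulVf ?sqrtr1 //.
    by rewrite expf_neq0 // gt_eqF.
  have e : cmod (ip (T k z') z') = s ^-2 * cmod (ip (T k z) z).
    rewrite /z' linearZ (ipZ_l hip) (ipZ_r hip) (cR s^-1) ?invr_ge0 ?ltW //.
    by rewrite !cmodM cmodR ?invr_ge0 ?ltW // mulrA -expr2 exprVn.
  have inS : Sset (Num.sqrt (\sum_(j < d) cmod (ip (T j z') z') ^+ 2)) by exists z'.
  have le1 : cmod (ip (T k z') z') <= W.
    apply: (le_trans (@term_le_sqrt _ _ (fun j => cmod (ip (T j z') z')) k _)).
      by move=> j; exact: cmod_ge0.
    have hsup : has_sup Sset by split => //; exists (Num.sqrt (\sum_(j < d) cmod (ip (T j z') z') ^+ 2)).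
    exact: (sup_upper_bound hsup inS).
  move: le1; rewrite e hs => le1.
  have sp : 0 < s ^+ 2 by rewrite exprn_gt0.
  by have := ler_wpM2r (ltW sp) le1; rewrite mulrAC mulVf ?gt_eqF // mul1r.
case: d T hT M hM Sset eW W ub HW => [|d] T hT M hM Sset eW W ub HW.
  by rewrite !big_ord0 addr0 sqrtr0 mulr0 !mul0r.
have [x0|x0] := eqVneq (N x) 0.
  have -> : x = 0 by apply: (N0 hip).
  rewrite /ipnorm (ip0_l hip) /= sqrtr0 mulr0.
  rewrite big1 ?add0r => [|k _]; last by rewrite linear0 /ipnorm (ip0_l hip) /= sqrtr0 expr0n.
  by rewrite big1 // => k _; rewrite !linear0 (ip0_l hip) cmodR.
set s := ipnorm ip x.
have hs : N x = s ^+ 2 by rewrite /N -(ipnorm2 hip).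
have s0 : 0 <= s := sqrtr_ge0 _.
have W0 : 0 <= W.
  have := HW ord0 x; rewrite hs => h.
  have sp : 0 < s ^+ 2.
    rewrite lt_def sqr_ge0 andbT; apply: contraNneq x0 => e; by rewrite hs e.
  by rewrite -(pmulr_lge0 _ sp); apply: le_trans h; exact: cmod_ge0.
have step : forall k : 'I_d.+1, ipnorm ip (T k x) ^+ 2 + cmod (ip (T k (T k x)) x)
    <= 2 * W * s * ipnorm ip (T k x).
  move=> k; have := key hip (HW k) x (T k x).
  by rewrite (ipxx hip) cmodR ?N_ge0 // -/(N (T k x)) (ipnorm2 hip).
rewrite -big_split /=; apply: (le_trans (ler_sum _ (fun k _ => step k))).
rewrite -mulr_sumr.
have cs := @sum_cs _ _ (fun k : 'I_d.+1 => ipnorm ip (T k x)).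
have hsum : \sum_k ipnorm ip (T k x) <= Num.sqrt (d.+1)%:R * Num.sqrt (\sum_k ipnorm ip (T k x) ^+ 2).
  rewrite -sqrtrM ?ler0n //.
  rewrite -(ger0_norm (sumr_ge0 _ (fun k _ => sqrtr_ge0 _))) -sqrtr_sqr.
  exact: ler_wsqrtr.
have -> : 2 * Num.sqrt (d.+1)%:R * W * Num.sqrt (\sum_k ipnorm ip (T k x) ^+ 2) * s
   = 2 * W * s * (Num.sqrt (d.+1)%:R * Num.sqrt (\sum_k ipnorm ip (T k x) ^+ 2)) by ring.
by apply: ler_wpM2l => //; rewrite mulr_ge0 // mulr_ge0.
Qed.
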